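(* Let $(X,d)$ be a metric space and let $u,u_1,u_2,\ldots\in F_{USC}(X)$. Then: (i) If there is a dense subset $P$ of $(0,1)$ such that $[u_n]_\alpha$ Kuratowski converges to $[u]_\alpha$ for every $\alpha\in P$, then $u_n\stackrel{\Gamma}{\longrightarrow}u$. (ii) If $u_n\stackrel{\Gamma}{\longrightarrow}u$, then $[u_n]_\alpha$ Kuratowski converges to $[u]_\alpha$ for all $\alpha\in(0,1)\setminus P(u)$.
   Context: A fuzzy set on $X$ is a function $u:X\to[0,1]$, with $\alpha$-cuts $[u]_\alpha=\{x: u(x)\ge\alpha\}$ for $\alpha\in(0,1]$ and $[u]_0=\overline{\{u>0\}}$. $F_{USC}(X)$ is the set of fuzzy sets with all $\alpha$-cuts ($\alpha\in[0,1]$) non-empty and closed. For sets $C_n\subseteq X$: $\liminf_n C_n=\{x: x=\lim_n x_n, x_n\in C_n\}$, $\limsup_n C_n=\{x: x=\lim_j x_{n_j}, x_{n_j}\in C_{n_j}\}$; $C_n$ Kuratowski converges to $C$ if $C=\liminf_n C_n=\limsup_n C_n$. ${\rm end}\,u=\{(x,t)\in X\times[0,1]: u(x)\ge t\}$, with $X\times[0,1]$ metrized by $\overline{d}((x,\alpha),(y,\beta))=d(x,y)+|\alpha-\beta|$. $u_n\stackrel{\Gamma}{\longrightarrow}u$ means ${\rm end}\,u_n$ Kuratowski converges to ${\rm end}\,u$. A number $\alpha\in(0,1)$ is a platform point of $u$ if $\overline{\{u>\alpha\}}\subsetneqq[u]_\alpha$; $P(u)$ denotes the set of platform points of $u$.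 *)

(* Defs.v *)
From Stdlib Require Import Reals.
Open Scope R_scope.

Definition is_metric {X : Type} (d : X -> X -> R) : Prop :=
  (forall x y, 0 <= d x y) /\
  (forall x y, d x y = 0 <-> x = y) /\
  (forall x y, d x y = d y x) /\
  (forall x y z, d x z <= d x y + d y z).

Definition seq_conv {X : Type} (d : X -> X -> R) (xs : nat -> X) (x : X) : Prop :=
  forall eps, 0 < eps -> exists N, forall n, (N <= n)%nat -> d (xs n) x < eps.

Definition closure {X : Type} (d : X -> X -> R) (A : X -> Prop) : X -> Prop :=
  fun x => forall eps, 0 < eps -> exists y, A y /\ d x y < eps.

Definition is_closed {X : Type} (d : X -> X -> R) (A : X -> Prop) : Prop :=
  forall x, closure d A x -> A x.

Definition set_eq {X : Type} (A B : X -> Prop) : Prop := forall x, A x <-> B x.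

Definition K_liminf {X : Type} (d : X -> X -> R) (C : nat -> X -> Prop) : X -> Prop :=
  fun x => exists xs : nat -> X, (forall n, C n (xs n)) /\ seq_conv d xs x.

Definition K_limsup {X : Type} (d : X -> X -> R) (C : nat -> X -> Prop) : X -> Prop :=
  fun x => exists (phi : nat -> nat) (ys : nat -> X),
    (forall j, (phi j < phi (S j))%nat) /\
    (forall j, C (phi j) (ys j)) /\ seq_conv d ys x.

Definition K_conv {X : Type} (d : X -> X -> R) (C : nat -> X -> Prop) (D : X -> Prop) : Prop :=
  set_eq D (K_liminf d C) /\ set_eq D (K_limsup d C).

Definition is_fuzzy {X : Type} (u : X -> R) : Prop := forall x, 0 <= u x <= 1.

Definition cut {X : Type} (d : X -> X -> R) (u : X -> R) (a : R) : X -> Prop :=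
  fun x => if Rle_lt_dec a 0 then closure d (fun y => 0 < u y) x else a <= u x.

Definition FUSC {X : Type} (d : X -> X -> R) (u : X -> R) : Prop :=
  is_fuzzy u /\
  forall a, 0 <= a <= 1 -> (exists x, cut d u a x) /\ is_closed d (cut d u a).

Definition endo {X : Type} (u : X -> R) : (X * R) -> Prop :=
  fun p => 0 <= snd p <= 1 /\ snd p <= u (fst p).

Definition dbar {X : Type} (d : X -> X -> R) (p q : X * R) : R :=
  d (fst p) (fst q) + Rabs (snd p - snd q).

Definition Gamma_conv {X : Type} (d : X -> X -> R) (us : nat -> X -> R) (u : X -> R) : Prop :=
  K_conv (dbar d) (fun n => endo (us n)) (endo u).

Definition platform_point {X : Type} (d : X -> X -> R) (u : X -> R) (a : R) : Prop :=
  0 < a < 1 /\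
  (forall x, closure d (fun y => a < u y) x -> cut d u a x) /\
  ~ set_eq (closure d (fun y => a < u y)) (cut d u a).

Definition dense_in_01 (P : R -> Prop) : Prop :=
  (forall p, P p -> 0 < p < 1) /\
  (forall a b, 0 <= a -> a < b -> b <= 1 -> exists p, P p /\ a < p < b).

(* Main.v *)
Require Import Defs.
From Stdlib Require Import Reals.
From Stdlib Require Import Lra Lia Classical ClassicalEpsilon.
Open Scope R_scope.

Lemma cut_pos {X} (d:X->X->R) u a x : 0 < a -> (cut d u a x <-> a <= u x).
Proof. intros Ha; unfold cut; destruct (Rle_lt_dec a 0); [lra| tauto]. Qed.

Lemma good_aux {X} (d: X->X->R) (C : X->Prop) z : (exists y, C y) -> forall m,
  exists y, C y /\ forall k, (k <= m)%nat ->
    (exists w, C w /\ d w z < / INR (S k)) -> d y z < / INR (S k).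
Proof.
intros [y0 Hy0] m. induction m as [|m IH].
- destruct (classic (exists w, C w /\ d w z < / INR 1)) as [[w [Hw1 Hw2]]|Hn].
  + exists w; split; auto. intros k Hk _. replace k with 0%nat by lia. exact Hw2.
  + exists y0; split; auto. intros k Hk Hg. replace k with 0%nat in Hg by lia. contradiction.
- destruct (classic (exists w, C w /\ d w z < / INR (S (S m)))) as [[w [Hw1 Hw2]]|Hn].
  + exists w; split; auto. intros k Hk _. eapply Rlt_le_trans; [exact Hw2|].
    apply Rinv_le_contravar. apply lt_0_INR; lia. apply le_INR; lia.
  + destruct IH as [y [Hy1 Hy2]]. exists y; split; auto. intros k Hk Hg.
    destruct (Nat.eq_dec k (S m)) as [->|Hne]; [contradiction|]. apply Hy2; [lia|exact Hg].
Qed.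

Lemma liminf_char {X} (d : X -> X -> R) (C : nat -> X -> Prop) z :
  (forall n, exists y, C n y) ->
  (forall eps, 0 < eps -> exists N, forall n, (N <= n)%nat -> exists y, C n y /\ d y z < eps) ->
  K_liminf d C z.
Proof.
intros Hne Hc.
assert (H : forall n, exists y, C n y /\ forall k, (k <= n)%nat ->
   (exists w, C n w /\ d w z < / INR (S k)) -> d y z < / INR (S k)).
{ intros n. apply good_aux. apply Hne. }
exists (fun n => proj1_sig (constructive_indefinite_description _ (H n))).
split.
- intros n. exact (proj1 (proj2_sig (constructive_indefinite_description _ (H n)))).
- intros eps Heps. destruct (archimed_cor1 eps Heps) as [K [HK HK0]].
  destruct (Hc (/ INR K)) as [N0 HN0]. { apply Rinv_0_lt_compat, lt_0_INR; lia. }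
  exists (max N0 K). intros n Hn.
  pose proof (proj2 (proj2_sig (constructive_indefinite_description _ (H n)))) as Hy.
  set (y := proj1_sig _) in *.
  assert (HKS : INR K = INR (S (K-1))) by (f_equal; lia).
  eapply Rlt_trans; [|exact HK]. rewrite HKS. apply Hy; [lia|]. rewrite <- HKS. apply HN0. lia.
Qed.

Lemma liminf_limsup {X} (d : X -> X -> R) (C : nat -> X -> Prop) z :
  K_liminf d C z -> K_limsup d C z.
Proof. intros [xs [H1 H2]]. exists (fun j => j), xs. split; [intros; lia| split; auto]. Qed.

Lemma Kconv_of {X} (d : X -> X -> R) C (D : X -> Prop) :
  (forall x, D x -> K_liminf d C x) -> (forall x, K_limsup d C x -> D x) -> K_conv d C D.
Proof.
intros H1 H2. split; intros x; split; auto.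
- intros H. apply H2, liminf_limsup, H.
- intros H. apply liminf_limsup, H1, H.
Qed.

Theorem theorem3p6 (X : Type) (d : X -> X -> R) (u : X -> R) (us : nat -> X -> R) :
  is_metric d -> FUSC d u -> (forall n, FUSC d (us n)) ->
  ((exists P : R -> Prop, dense_in_01 P /\
      (forall a, P a -> K_conv d (fun n => cut d (us n) a) (cut d u a))) ->
    Gamma_conv d us u) /\
  (Gamma_conv d us u ->
    forall a, 0 < a < 1 -> ~ platform_point d u a ->
      K_conv d (fun n => cut d (us n) a) (cut d u a)).
Proof.
intros Hm Hu Hus. destruct Hm as [Hd0 [Hdeq [Hsym Htri]]].
destruct Hu as [Hfz Hcut].
split.
- intros [P [[HP1 HP2] HPc]]. unfold Gamma_conv. apply Kconv_of.
  + intros [x t]. unfold endo; simpl. intros [[Ht0 Ht1] Htu]. apply liminf_char.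
    * intros n; exists (x, 0); unfold endo; simpl. destruct (Hus n) as [Hf _]. destruct (Hf x); lra.
    * intros eps Heps. destruct (Rle_lt_dec t 0) as [Ht|Ht].
      { exists 0%nat; intros n _; exists (x,0); split.
        { unfold endo; simpl. destruct (Hus n) as [Hf _]. destruct (Hf x); lra. }
        unfold dbar; simpl. rewrite (proj2 (Hdeq x x) eq_refl).
        replace (0 - t) with 0 by lra. rewrite Rabs_R0. lra. }
      destruct (HP2 (Rmax 0 (t - eps/2)) t) as [p [Pp [Hp1 Hp2]]].
      { apply Rmax_l. } { apply Rmax_lub_lt; lra. } { lra. }
      assert (Hpt : t - eps/2 < p) by (eapply Rle_lt_trans; [apply Rmax_r| exact Hp1]).
      destruct (HPc p Pp) as [Hli _].
      destruct (proj1 (Hli x)) as [xs [Hxs Hconv]].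
      { apply cut_pos; [apply HP1, Pp| lra]. }
      destruct (Hconv (eps/2)) as [N HN]; [lra|].
      exists N; intros n Hn; exists (xs n, p). split.
      { unfold endo; simpl. pose proof (HP1 p Pp). split; [lra|].
        apply (cut_pos d (us n) p (xs n)); [lra| apply Hxs]. }
      unfold dbar; simpl. rewrite Rabs_left by lra. specialize (HN n Hn). lra.
  + intros [x t] [phi [ys [Hphi [Hys Hc]]]].
    assert (Hc' : forall eps, 0 < eps -> exists N, forall n, (N <= n)%nat ->
       d (fst (ys n)) x < eps /\ Rabs (snd (ys n) - t) < eps).
    { intros eps Heps. destruct (Hc eps Heps) as [N HN]. exists N. intros n Hn.
      specialize (HN n Hn). unfold dbar in HN; simpl in HN.
      pose proof (Hd0 (fst (ys n)) x). pose proof (Rabs_pos (snd (ys n) - t)). split; lra. }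
    unfold endo; simpl.
    assert (Ht0 : 0 <= t).
    { apply Rnot_lt_le; intro Hlt. destruct (Hc' (-t)) as [N HN]; [lra|].
      destruct (HN N (le_n _)) as [_ H2]. apply Rabs_def2 in H2.
      destruct (Hys N) as [[H3 _] _]. lra. }
    assert (Ht1 : t <= 1).
    { apply Rnot_lt_le; intro Hlt. destruct (Hc' (t-1)) as [N HN]; [lra|].
      destruct (HN N (le_n _)) as [_ H2]. apply Rabs_def2 in H2.
      destruct (Hys N) as [[_ H3] _]. lra. }
    split; [lra|].
    apply Rnot_lt_le; intro Hux.
    destruct (Hfz x) as [Hux0 _].
    destruct (HP2 (u x) t) as [p [Pp [Hp1 Hp2]]]; [lra|lra|lra|].
    destruct (HPc p Pp) as [_ Hls].
    pose proof (HP1 p Pp) as Hp01.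
    assert (Hcx : cut d u p x).
    { apply (proj2 (Hls x)).
      destruct (Hc' (t - p)) as [N HN]; [lra|].
      exists (fun j => phi (j + N)%nat), (fun j => fst (ys (j + N)%nat)).
      split; [|split].
      - intros j. replace (S j + N)%nat with (S (j + N)) by lia. apply Hphi.
      - intros j. apply cut_pos; [lra|].
        destruct (Hys (j+N)%nat) as [_ H3].
        destruct (HN (j+N)%nat ltac:(lia)) as [_ H2]. apply Rabs_def2 in H2. lra.
      - intros eps Heps. destruct (Hc' eps Heps) as [N' HN'].
        exists N'. intros n Hn. apply (HN' (n+N)%nat). lia. }
    apply (cut_pos d u p x) in Hcx; lra.
- intros [Hli Hls] a Ha Hnp.
  destruct (Hcut a ltac:(lra)) as [_ Hcl].
  assert (Hsub : forall x, closure d (fun y => a < u y) x -> cut d u a x).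
  { intros x Hx. apply Hcl. intros eps Heps. destruct (Hx eps Heps) as [y [Hy1 Hy2]].
    exists y; split; auto. apply cut_pos; lra. }
  assert (Heq : set_eq (closure d (fun y => a < u y)) (cut d u a)).
  { apply NNPP; intro Hn. apply Hnp. split; [lra|split; auto]. }
  apply Kconv_of.
  + intros x Hx. apply liminf_char.
    * intros n. destruct (Hus n) as [_ Hc]. destruct (Hc a ltac:(lra)) as [[y Hy] _].
      exists y; exact Hy.
    * intros eps Heps. destruct (proj2 (Heq x) Hx (eps/2)) as [y [Hy1 Hy2]]; [lra|].
      destruct (proj1 (Hli (y, u y))) as [zs [Hzs Hzc]].
      { unfold endo; simpl. destruct (Hfz y). lra. }
      destruct (Hzc (Rmin (eps/2) (u y - a))) as [N HN].
      { apply Rmin_glb_lt; lra. }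
      exists N; intros n Hn; exists (fst (zs n)).
      specialize (HN n Hn). unfold dbar in HN; simpl in HN.
      pose proof (Rmin_l (eps/2) (u y - a)). pose proof (Rmin_r (eps/2) (u y - a)).
      pose proof (Hd0 (fst (zs n)) y). pose proof (Rabs_pos (snd (zs n) - u y)).
      assert (Hab : Rabs (snd (zs n) - u y) < u y - a) by lra.
      apply Rabs_def2 in Hab.
      destruct (Hzs n) as [_ Hz3]. split.
      { apply cut_pos; lra. }
      pose proof (Htri (fst (zs n)) y x) as Ht3. rewrite (Hsym y x) in Ht3. lra.
  + intros x [phi [ys [Hphi [Hys Hc]]]].
    assert (He : endo u (x, a)).
    { apply (proj2 (Hls (x,a))). exists phi, (fun j => (ys j, a)).
      split; [exact Hphi|split].
      - intros j. unfold endo; simpl. split; [lra|]. apply (cut_pos d _ a); [lra|apply Hys].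
      - intros eps Heps. destruct (Hc eps Heps) as [N HN]. exists N. intros n Hn.
        unfold dbar; simpl. replace (a - a) with 0 by lra. rewrite Rabs_R0.
        specialize (HN n Hn). lra. }
    destruct He as [_ He]. simpl in He. apply cut_pos; lra.
Qed.
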